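(* Consider a congestion game in which each $\mathcal{A}_i$ is the set of all $k$-subsets of $\mathcal{F}$ and which admits a strict Nash equilibrium $a^*$ (with $\omega_i^*$ the point mass on $a_i^*$). Let $\epsilon>0$ and $U_\epsilon$ be as in Lemma 1, and let $M\ge|\log(\epsilon/(2kF))|$ be such that $U_M\subseteq U_\epsilon$. Suppose every player runs CongestEXP with expected-reward feedback and learning rate $\eta$, with initial values $\tilde y_i^0$ chosen so that $\omega^0\in U_M$. Then for every $i\in[n]$ and every $t$, \[ \|\omega_i^t-\omega_i^*\|_1\le 2kF\exp(-M-\eta\epsilon t). \]
   Context: Congestion game: $n$ players, facility set $\mathcal{F}$ with $F$ facilities, facility rewards $r^f\in[0,1]$ depending on a joint action only through the load of $f$; $r_i(a)=\sum_{f\in a_i}r^f(a)$, extended to mixed strategies by expectation under independent sampling. Strict Nash equilibrium: pure $a^*$ with $r_i(a_i^*,a_{-i}^* )>r_i(a_i,a_{-i}^* )$ for all $i$, $a_i\ne a_i^*$. Lemma 1: there are $\epsilon>0$ and a neighborhood $U_\epsilon$ of $a^*$ in joint mixed strategy space with $r_i(a_i^*,\tilde\omega_{-i})-r_i(a_i,\tilde\omega_{-i})\ge\epsilon$ for all $\tilde\omega\in U_\epsilon$, all $i$, $a_i\ne a_i^*$. CongestEXP with expected-reward feedback (player $i$, learning rate $\eta$): initial reals $\tilde y_i^0(f)$; at round $t\ge1$, $\tilde y_i^t(f)=\mathbb{E}_{a_{-i}\sim\omega_{-i}^t}[r^f(a_i,a_{-i})]$ for any $a_i\ni f$. Strategies: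 $\omega_i^t(a)\propto\prod_{f\in a}\exp(\eta\sum_{j=0}^{t}\tilde y_i^j(f))$ over $a\in\mathcal{A}_i$ (indexing so that $\omega^0$ is determined by $\tilde y^0$). Define $\tilde z_i^t(a_i)=\eta\sum_{j=0}^t(\sum_{f\in a_i}\tilde y_i^j(f)-\sum_{f\in a_i^*}\tilde y_i^j(f))$ and $U_M=\{\omega^t:\tilde z_i^t(a_i)\le -M\ \forall i,\ \forall a_i\ne a_i^*\}$. *)

(* Defs.v *)
From HB Require Import structures.
From mathcomp Require Import all_boot all_order all_algebra.
From mathcomp Require Import all_classical all_reals all_analysis.
Set Implicit Arguments. Unset Strict Implicit. Unset Printing Implicit Defensive.
Import Order.TTheory GRing.Theory Num.Theory.
Local Open Scope ring_scope.
Local Open Scope classical_set_scope.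

Section Congestion.
Variables (R : realType) (n F k : nat).

Definition act := {a : {set 'I_F} | #|a| == k}.
Definition jact := {ffun 'I_n -> act}.
(* joint mixed strategies (player i's mixed strategy is omega i : act -> R) *)
Definition profile := 'I_n -> act -> R.

Definition load (a : jact) (f : 'I_F) : nat := #|[set j | f \in val (a j)]|.

Definition fac_reward (c : 'I_F -> nat -> R) (f : 'I_F) (a : jact) : R :=
  c f (load a f).

Definition reward (c : 'I_F -> nat -> R) (i : 'I_n) (a : jact) : R :=
  \sum_(f in val (a i)) fac_reward c f a.

Definition expect (om : profile) (g : jact -> R) : R :=
  \sum_(a : jact) (\prod_(j < n) om j (a j)) * g a.

Definition pure (a : act) : act -> R := fun b => (b == a)%:R.

Definition dev (om : profile) (i : 'I_n) (p : act -> R) : profile :=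
  fun j => if j == i then p else om j.

Definition mixed_reward (c : 'I_F -> nat -> R) (om : profile) (i : 'I_n)
  (a : act) : R := expect (dev om i (pure a)) (reward c i).

Definition is_mixed (om : profile) : Prop :=
  forall i, (forall a, 0 <= om i a) /\ \sum_(a : act) om i a = 1.

Definition strict_NE (c : 'I_F -> nat -> R) (astar : 'I_n -> act) : Prop :=
  forall (i : 'I_n) (a : act), a != astar i ->
    reward c i [ffun j => if j == i then a else astar j] <
    reward c i [ffun j => astar j].

(* U_eps as in Lemma 1: a neighborhood of a* in joint mixed strategy space
   on which a*_i beats every other a_i by at least eps against omega_{-i} *)
Definition lemma1_nbhd (c : 'I_F -> nat -> R) (astar : 'I_n -> act) (eps : R)
  (U : set profile) : Prop :=
  [/\ (forall om, U om -> is_mixed om),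
      (exists2 d : R, 0 < d & forall om, is_mixed om ->
          (forall i a, `|om i a - pure (astar i) a| < d) -> U om) &
      (forall om, U om -> forall i a, a != astar i ->
          eps <= mixed_reward c om i (astar i) - mixed_reward c om i a)].

Definition softmax (eta : R) (Y : 'I_n -> 'I_F -> R) : profile :=
  fun i a => (\prod_(f in val a) expR (eta * Y i f)) /
             (\sum_(b : act) \prod_(f in val b) expR (eta * Y i f)).

Definition cum (y : nat -> 'I_n -> 'I_F -> R) (t : nat) : 'I_n -> 'I_F -> R :=
  fun i f => \sum_(j < t.+1) y j i f.

Definition cexp_strategy (eta : R) (y : nat -> 'I_n -> 'I_F -> R) (t : nat)
  : profile := softmax eta (cum y t).

Definition expected_feedback (c : 'I_F -> nat -> R) (eta : R)
  (y : nat -> 'I_n -> 'I_F -> R) : Prop :=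
  forall (t : nat) (i : 'I_n) (f : 'I_F) (a : act), f \in val a ->
    y t.+1 i f = expect (dev (cexp_strategy eta y t) i (pure a)) (fac_reward c f).

(* U_M: strategy profiles (of CongestEXP form, from cumulative scores Y) with
   z_i(a_i) = eta*(sum_{f in a_i} Y_i f - sum_{f in a*_i} Y_i f) <= -M *)
Definition UM (eta M : R) (astar : 'I_n -> act) : set profile :=
  [set om | exists Y : 'I_n -> 'I_F -> R, om = softmax eta Y /\
     forall i (a : act), a != astar i ->
       eta * (\sum_(f in val a) Y i f - \sum_(f in val (astar i)) Y i f) <= - M].

End Congestion.

(* Main.v *)
Require Import Defs.
From HB Require Import structures.
From mathcomp Require Import all_boot all_order all_algebra.
From mathcomp Require Import all_classical all_reals all_analysis.
From mathcomp Require Import ring lra.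
Set Implicit Arguments. Unset Strict Implicit. Unset Printing Implicit Defensive.
Import Order.TTheory GRing.Theory Num.Theory.
Local Open Scope ring_scope.


Section Helpers.
Variables (R : realType) (n F k : nat).

Definition ssum (Y : 'I_F -> R) (a : act F k) : R := \sum_(f in val a) Y f.

Definition Dn (eta : R) (Y : 'I_n -> 'I_F -> R) i : R :=
  \sum_(b : act F k) expR (eta * ssum (Y i) b).

Lemma softmaxE eta (Y : 'I_n -> 'I_F -> R) i (a : act F k) :
  softmax eta Y i a = expR (eta * ssum (Y i) a) / Dn eta Y i.
Proof.
rewrite /softmax /Dn /ssum mulr_sumr expR_sum; congr (_ / _).
by apply: eq_bigr => b _; rewrite mulr_sumr expR_sum.
Qed.

Lemma softmax_ratio eta (Y : 'I_n -> 'I_F -> R) i (a b : act F k) :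
  softmax eta Y i a = expR (eta * (ssum (Y i) a - ssum (Y i) b)) * softmax eta Y i b.
Proof.
rewrite !softmaxE mulrA -expRD; congr (expR _ / _); ring.
Qed.

Lemma Dn_gt0 eta (Y : 'I_n -> 'I_F -> R) i (a0 : act F k) : 0 < Dn eta Y i.
Proof.
rewrite /Dn (bigD1 a0) //=; apply: ltr_pwDl; first exact: expR_gt0.
by apply: sumr_ge0 => b _; apply: ltW; apply: expR_gt0.
Qed.

Lemma softmax_gt0 eta (Y : 'I_n -> 'I_F -> R) i (a : act F k) : 0 < softmax eta Y i a.
Proof. by rewrite softmaxE divr_gt0 // ?expR_gt0 // (Dn_gt0 _ _ _ a). Qed.

Lemma softmax_sum eta (Y : 'I_n -> 'I_F -> R) i (a0 : act F k) : \sum_(a : act F k) softmax eta Y i a = 1.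
Proof.
under eq_bigr do rewrite softmaxE.
rewrite -mulr_suml divff //; exact/lt0r_neq0/(Dn_gt0 _ _ _ a0).
Qed.


Definition swp (a : act F k) (f g : 'I_F) : act F k :=
  insubd a (g |: (val a :\ f)).

Lemma swpE (a : act F k) f g : f \in val a -> g \notin val a ->
  val (swp a f g) = g |: (val a :\ f).
Proof.
move=> fa ga; rewrite /swp insubdK //; rewrite unfold_in /= cardsU1 in_setD1 (negbTE ga) andbF /=.
have Ha : #|val a| = k by apply/eqP; exact: (valP a).
apply/eqP; apply: etrans Ha; by rewrite [in RHS](cardsD1 f (val a)) fa.
Qed.

Lemma ssum_swp (Y : 'I_F -> R) (a : act F k) f g : f \in val a -> g \notin val a ->
  ssum Y a - ssum Y (swp a f g) = Y f - Y g.
Proof.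
move=> fa ga; rewrite /ssum swpE // big_setU1 /=; last by rewrite in_setD1 (negbTE ga) andbF.
rewrite (big_setD1 f fa) /=; ring.
Qed.

Lemma swp_inj (f g : 'I_F) :
  {in [set a : act F k | (f \in val a) && (g \notin val a)] &, injective (fun a => swp a f g)}.
Proof.
move=> a b; rewrite !inE => /andP[fa ga] /andP[fb gb] E.
have := congr1 val E; rewrite !swpE // => E2.
apply: val_inj; apply/setP => x.
move/setP: E2 => /(_ x); rewrite !in_setU1 !in_setD1.
case: (eqVneq x f) => [->|xf]; first by rewrite fa fb.
case: (eqVneq x g) => [->|xg /=]; first by rewrite (negbTE ga) (negbTE gb).
done.
Qed.

Lemma exists_out (a b : act F k) : a != b -> exists2 f, f \in val a & f \notin val b.
Proof.
move=> ab; apply/subsetPn; apply: contra ab => sab.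
apply/eqP; apply: val_inj; apply/eqP; rewrite eqEcard sab /=.
have Ha : #|val a| = k by apply/eqP; exact: (valP a).
have Hb : #|val b| = k by apply/eqP; exact: (valP b).
by rewrite Ha Hb.
Qed.

Lemma sum_sub_le (A : {set act F k}) (w : act F k -> R) :
  (forall a, 0 <= w a) -> \sum_(b in A) w b <= \sum_b w b.
Proof.
move=> w0; rewrite [X in _ <= X](bigID (mem A)) /= lerDl.
by apply: sumr_ge0 => b _.
Qed.

Lemma count_bound (w : act F k -> R) (as0 : act F k) (x : R) :
  (forall a, 0 <= w a) -> 0 <= x ->
  (forall (a : act F k) (f g : 'I_F), f \in val a -> f \notin val as0 -> g \in val as0 -> g \notin val a ->
     w a <= x * w (swp a f g)) ->
  \sum_(a | a != as0) w a <= (k * F)%:R * x * \sum_b w b.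
Proof.
move=> w0 x0 Hw.
pose T (a : act F k) (f g : 'I_F) := if [&& f \in val a, g \notin val a, g \in val as0 & f \notin val as0]
  then x * w (swp a f g) else 0.
have T0 a f g : 0 <= T a f g by rewrite /T; case: ifP => // _; apply: mulr_ge0.
apply: (@le_trans _ _ (\sum_(a | a != as0) \sum_f \sum_g T a f g)).
  apply: ler_sum => a aas.
  have [f fa fas] := exists_out aas.
  have [g gas ga] : exists2 g, g \in val as0 & g \notin val a.
    by apply: exists_out; rewrite eq_sym.
  rewrite (bigD1 f) //= (bigD1 g) //= -addrA.
  have -> : T a f g = x * w (swp a f g) by rewrite /T fa ga gas fas.
  rewrite -[w a]addr0; apply: lerD; first exact: Hw.
  apply: addr_ge0; first by apply: sumr_ge0.
  by apply: sumr_ge0 => f' _; apply: sumr_ge0.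
apply: (@le_trans _ _ (\sum_a \sum_f \sum_g T a f g)).
  rewrite [X in _ <= X](bigID (fun a => a != as0)) /= lerDl.
  by apply: sumr_ge0 => a _; apply: sumr_ge0 => f _; apply: sumr_ge0.
rewrite exchange_big /=; under eq_bigr do rewrite exchange_big /=.
set S := \sum_b w b.
apply: (@le_trans _ _ (\sum_(f < F) \sum_(g < F) (g \in val as0)%:R * (x * S))).
  apply: ler_sum => f _; apply: ler_sum => g _.
  case gas: (g \in val as0); last first.
    rewrite mul0r big1 // => a _; rewrite /T; case: ifP => // /and4P[_ _ Hg _]; by move: Hg; rewrite gas.
  rewrite (_ : (true%:R : R) = 1) // mul1r.
  pose A := [set a : act F k | (f \in val a) && (g \notin val a)].
  apply: (@le_trans _ _ (\sum_(a in A) x * w (swp a f g))).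
    rewrite [X in _ <= X]big_mkcond /=; apply: ler_sum => a _; rewrite /T ?inE.
    case: ifP => [/and4P[-> -> _ _]|_] //=; case: ifP => _ //; exact: mulr_ge0.
  rewrite -mulr_sumr; apply: ler_wpM2l => //.
  rewrite -(big_imset _ (@swp_inj f g)) /=.
  exact: sum_sub_le.
have Hk : \sum_(g < F) (g \in val as0)%:R = k%:R :> R.
  transitivity (\sum_(g in val as0) (1 : R)).
    by rewrite [RHS]big_mkcond; apply: eq_bigr => g _; case: (g \in val as0).
  rewrite sumr_const.
  have Ha : #|val as0| = k by apply/eqP; exact: (valP as0).
  by rewrite Ha.
under eq_bigr do rewrite -mulr_suml Hk.
rewrite sumr_const card_ord -mulr_natl natrM -mulr_natr mulr1; rewrite le_eqVlt; apply/orP; left; apply/eqP; ring.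
Qed.

Lemma mixed_reward_sum (c : 'I_F -> nat -> R) (om : profile R n F k) i (a : act F k) :
  mixed_reward c om i a =
  \sum_(f in val a) expect (dev om i (pure R a)) (fac_reward c f).
Proof.
rewrite /mixed_reward /expect /reward exchange_big /=.
apply: eq_bigr => b _; rewrite -mulr_sumr.
case: (eqVneq (b i) a) => [->//|bia].
rewrite (bigD1 i) //= /dev eqxx /pure (negbTE bia) !mul0r //.
Qed.

End Helpers.

Local Open Scope classical_set_scope.

Theorem theorem2 (R : realType) (n F k : nat) (c : 'I_F -> nat -> R)
  (astar : 'I_n -> act F k) (eps : R) (Ueps : set (profile R n F k))
  (M eta : R) (y : nat -> 'I_n -> 'I_F -> R) :
  (forall f l, 0 <= c f l <= 1) ->
  strict_NE c astar ->
  0 < eps ->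
  lemma1_nbhd c astar eps Ueps ->
  `| ln (eps / (2 * k * F)%:R) | <= M ->
  UM eta M astar `<=` Ueps ->
  0 < eta ->
  expected_feedback k c eta y ->
  UM eta M astar (cexp_strategy eta y 0) ->
  forall (i : 'I_n) (t : nat),
    \sum_(a : act F k) `| cexp_strategy eta y t i a - pure R (astar i) a |
      <= (2 * k * F)%:R * expR (- M - eta * eps * t%:R).
Proof.
move=> _ _ eps0 [_ _ Ugap] _ sUM eta0 Hfb [Y [HY HYc]].
pose Z (t : nat) (i : 'I_n) (a : act F k) := eta * (ssum (cum y t i) a - ssum (cum y t i) (astar i)).
have HZ : forall t i a, a != astar i -> Z t i a <= - M - eta * eps * t%:R.
  elim => [|t IH] i a aa.
    rewrite mulr0 subr0.
    have E1 := softmax_ratio eta (cum y 0) i a (astar i).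
    have E2 := softmax_ratio eta Y i a (astar i).
    have E3 : softmax eta (cum y 0) = softmax eta Y :> profile R n F k by rewrite -HY /cexp_strategy.
    rewrite E3 E2 in E1.
    have p0 := softmax_gt0 eta Y i (astar i).
    have := mulIf (lt0r_neq0 p0) E1 => /expR_inj E4.
    by rewrite /Z -E4; apply: HYc.
  have UMt : UM eta M astar (cexp_strategy eta y t).
    exists (cum y t); split => // i' a' h; apply: le_trans (IH i' a' h) _.
    rewrite lerBlDr lerDl; apply: mulr_ge0; last by [].
    by apply: mulr_ge0; apply: ltW.
  have G := Ugap _ (sUM _ UMt) i a aa.
  have ME (b : act F k) : mixed_reward c (cexp_strategy eta y t) i b = ssum (y t.+1 i) b.
    rewrite mixed_reward_sum /ssum; apply: eq_bigr => f fb.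
    by rewrite (Hfb t i f b fb).
  rewrite !ME in G.
  have CS (b : act F k) : ssum (cum y t.+1 i) b = ssum (cum y t i) b + ssum (y t.+1 i) b.
    rewrite /ssum -big_split /=; apply: eq_bigr => f _.
    by rewrite /cum big_ord_recr /=.
  move: (IH i a aa); rewrite /Z !CS -natr1 => IH'.
  have : eta * eps <= eta * (ssum (y t.+1 i) (astar i) - ssum (y t.+1 i) a).
    by rewrite ler_pM2l.
  move=> H2.
  have -> : eta * (ssum (cum y t i) a + ssum (y t.+1 i) a -
     (ssum (cum y t i) (astar i) + ssum (y t.+1 i) (astar i))) =
     eta * (ssum (cum y t i) a - ssum (cum y t i) (astar i)) -
     eta * (ssum (y t.+1 i) (astar i) - ssum (y t.+1 i) a) by ring.
  have -> : - M - eta * eps * (t%:R + 1) = (- M - eta * eps * t%:R) - eta * eps by ring.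
  exact: lerB.
move=> i t.
set w := cexp_strategy eta y t i.
have w0 a : 0 < w a by apply: softmax_gt0.
have ws : \sum_a w a = 1 by apply: (softmax_sum _ _ _ (astar i)).
set x := expR (- M - eta * eps * t%:R).
have Hb : \sum_(a | a != astar i) w a <= (k * F)%:R * x * \sum_b w b.
  apply: count_bound => //; first by move=> a; apply: ltW.
    exact: expR_ge0.
  move=> a f g fa fas gas ga.
  rewrite /w /cexp_strategy (softmax_ratio _ _ _ a (swp a f g)) ssum_swp //.
  apply: ler_wpM2r; first exact: ltW (softmax_gt0 _ _ _ _).
  rewrite /x ler_expR.
  have a0n : swp (astar i) g f != astar i.
    apply/eqP => E.
    have : f \in val (swp (astar i) g f) by rewrite swpE // in_setU1 eqxx.
    by rewrite E (negbTE fas).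
  apply: le_trans (HZ t i _ a0n); rewrite /Z.
  have E := ssum_swp (cum y t i) gas fas.
  have -> : ssum (cum y t i) (swp (astar i) g f) - ssum (cum y t i) (astar i)
    = cum y t i f - cum y t i g by rewrite -opprB E opprB.
  by [].
rewrite ws mulr1 in Hb.
rewrite (bigD1 (astar i)) //= /pure eqxx.
have -> : \sum_(a | a != astar i) `|w a - (a == astar i)%:R| = \sum_(a | a != astar i) w a.
  apply: eq_bigr => a aa; rewrite (negbTE aa) subr0 gtr0_norm //.
move: ws; rewrite (bigD1 (astar i)) //= => ws.
have -> : `|w (astar i) - 1%:R| = \sum_(a | a != astar i) w a.
  rewrite ler0_norm; last by rewrite subr_le0 -ws lerDl; apply: sumr_ge0 => a _; apply: ltW.
  rewrite -ws; ring.
rewrite natrM; rewrite natrM in Hb.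
have -> : (2 * k)%:R * F%:R * x = (k%:R * F%:R * x) *+ 2 :> R.
  by rewrite natrM mulr2n; ring.
by rewrite mulr2n; apply: lerD.
Qed.
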